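(* Let $C$ be a cycle, $\mathcal H$ a family of vertex subsets of $C$ such that $(C,\mathcal H)$ is $abab$-free, and $c:V(C)\to\{\mathbf r,\mathbf b\}$ a 2-colouring. Then there is an outerplanar graph $Q$ with vertex set $\mathbf b(V(C))=c^{-1}(\mathbf b)$ such that $Q[H\cap\mathbf b(V(C))]$ is connected for every $H\in\mathcal H$.
   Context: Let $C$ be a cycle with a fixed cyclic orientation; ''vertices $p_1,\dots,p_4$ in cyclic order'' means four distinct vertices met in this order when traversing $C$. A pair $H,H'\in\mathcal H$ is an $abab$-pair if there are vertices $a_1,b_1,a_2,b_2$ in cyclic order with $a_1,a_2\in H\setminus H'$ and $b_1,b_2\in H'\setminus H$; $(C,\mathcal H)$ is $abab$-free if there is no $abab$-pair. The 2-colouring need not be proper. A graph is outerplanar if it has a plane embedding with all vertices on the outer face. *)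

(* Defs.v *)
From mathcomp Require Import all_boot.
Set Implicit Arguments. Unset Strict Implicit. Unset Printing Implicit Defensive.

(* The cycle C has vertex set 'I_n; its fixed cyclic orientation is
   0 -> 1 -> ... -> n-1 -> 0. *)

Definition cyc_order4 n (p1 p2 p3 p4 : 'I_n) : bool :=
  [|| (p1 < p2 < p3) && (p3 < p4),
      (p2 < p3 < p4) && (p4 < p1),
      (p3 < p4 < p1) && (p1 < p2)
    | (p4 < p1 < p2) && (p2 < p3)].

Definition abab_pair n (H H' : {set 'I_n}) : Prop :=
  exists a1 b1 a2 b2 : 'I_n,
    [/\ cyc_order4 a1 b1 a2 b2,
        a1 \in H :\: H', a2 \in H :\: H',
        b1 \in H' :\: H & b2 \in H' :\: H].

Definition abab_free n (F : {set {set 'I_n}}) : Prop :=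
  forall H H', H \in F -> H' \in F -> ~ abab_pair H H'.

Definition simple_graph_on (T : finType) (V : {set T}) (Q : rel T) : Prop :=
  [/\ forall x y, Q x y = Q y x,
      forall x, ~~ Q x x
    & forall x y, Q x y -> (x \in V) && (y \in V)].

(* Outerplanarity: the vertices of V can be placed in a cyclic order on a circle
   (the sequence s) so that the edges, drawn as straight chords, do not cross.
   This is the standard combinatorial form of "has a plane embedding with all
   vertices on the outer face". *)
Definition outerplanar_on (T : finType) (V : {set T}) (Q : rel T) : Prop :=
  exists s : seq T,
    [/\ uniq s, s =i V &
        forall x0 (i j k l : nat), i < j -> j < k -> k < l -> l < size s ->
          ~~ (Q (nth x0 s i) (nth x0 s k) && Q (nth x0 s j) (nth x0 s l))].

Definition induced_connected (T : finType) (Q : rel T) (S : {set T}) : Prop :=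
  forall x y, x \in S -> y \in S ->
    connect [rel u v | [&& Q u v, u \in S & v \in S]] x y.

(* Main.v *)
Require Import Defs.
From mathcomp Require Import all_boot zify.
From Stdlib Require Import Classical.
Set Implicit Arguments. Unset Strict Implicit. Unset Printing Implicit Defensive.

Definition NoAbab (I : Type) (mem : I -> nat -> bool) (inF : I -> Prop) :=
  forall u v, inF u -> inF v -> forall z x y w, z < x -> x < y -> y < w ->
    mem u z -> ~~ mem v z -> mem v x -> ~~ mem u x -> mem u y -> ~~ mem v y ->
    mem v w -> ~~ mem u w -> False.

Lemma LR (I : Type) (mem : I -> nat -> bool) (inF : I -> Prop) :
  NoAbab mem inF -> forall u v x y, inF u -> inF v ->
  mem v x -> ~~ mem u x -> mem u y -> ~~ mem v y -> x < y ->
  (forall z, z < x -> mem u z -> mem v z) \/ (forall z, y < z -> mem v z -> mem u z).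
Proof.
move=> hF u v x y iu iv vx ux uy vy xy.
apply: NNPP; move=> H; apply H; left => z zx uz.
case vz: (mem v z) => //; exfalso; apply H; right => w yw vw.
case uw: (mem u w) => //; exfalso.
by apply: (hF u v iu iv z x y w zx xy yw uz); rewrite ?vz ?uw.
Qed.

Lemma maxP (P : nat -> Prop) n : P 0 -> 0 < n ->
  exists j, [/\ j < n, P j & forall i, j < i -> i < n -> ~ P i].
Proof.
move=> P0; elim: n => [//|n IH] _.
case: (classic (P n)) => Pn.
  by exists n; split => // i ni ilt; lia.
case: n IH Pn => [|n] IH Pn; first by exists 0; split => // i; lia.
have [j [jn Pj Hj]] := IH isT.
exists j; split => //; first lia.
move=> i ji il; case: (ltnP i n.+1) => il2; first exact: Hj.
by have -> : i = n.+1 by lia.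
Qed.

Ltac ifs := repeat match goal with |- context [if ?c then _ else _] =>
  let h := fresh "hif" in case: (boolP c) => h; try (exfalso; lia) end.

Lemma chain_lemma (I : Type) (mem : I -> nat -> bool) (inF : I -> Prop)
  (hF : NoAbab mem inF) a b :
  forall t (A : nat -> I) (x y : nat -> nat),
  0 < t ->
  (forall i, i < t -> inF (A i)) ->
  (forall i, i.+1 < t -> [/\ mem (A i.+1) (x i), ~~ mem (A i) (x i),
       mem (A i) (y i), ~~ mem (A i.+1) (y i) & [/\ x i < y i, a < x i & y i < b]]) ->
  (forall i, i.+2 < t -> x i < x i.+1 /\ y i < y i.+1) ->
  mem (A 0) a -> mem (A t.-1) b ->
  exists2 i, i < t & mem (A i) a && mem (A i) b.
Proof.
elim=> [//|t IH] A x y _ HA Hp Hm Ha Hb.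
case: t IH Hp Hm Hb HA => [|t] IH Hp Hm Hb HA.
  by exists 0 => //; rewrite Ha.
have LRp : forall i, i.+1 < t.+2 ->
   (forall z, z < x i -> mem (A i) z -> mem (A i.+1) z) \/
   (forall z, y i < z -> mem (A i.+1) z -> mem (A i) z).
  move=> i hi; have [h1 h2 h3 h4 [h5 _ _]] := Hp i hi.
  apply: (LR hF) => //; apply: HA => //; lia.
case: (LRp 0 isT) => [L0|R0].
  have := IH (fun i => A i.+1) (fun i => x i.+1) (fun i => y i.+1) isT.
  case.
  - by move=> i hi; apply: HA.
  - by move=> i hi; apply: Hp.
  - by move=> i hi; apply: Hm.
  - by apply: L0 => //; have [_ _ _ _ [_ h _]] := Hp 0 isT.
  - by [].
  by move=> i hi hab; exists i.+1.
pose Rp i := forall z, y i < z -> mem (A i.+1) z -> mem (A i) z.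
have [j [jlt Rj Hj]] := @maxP Rp t.+1 R0 isT.
case: (ltnP j t) => jt; last first.
  have jt' : j = t by move: jt jlt; clear; lia.
  subst j.
  have := IH A x y isT.
  case.
  - move=> i hi; apply: HA; lia.
  - move=> i hi; apply: Hp; lia.
  - move=> i hi; apply: Hm; lia.
  - by [].
  - by apply: Rj => //; have [_ _ _ _ [_ _ h]] := Hp t ltac:(lia).
  move=> i hi hab; exists i => //; lia.
have Lj1 : forall z, z < x j.+1 -> mem (A j.+1) z -> mem (A j.+2) z.
  case: (LRp j.+1 ltac:(lia)) => [h|h]; first exact h.
  exfalso; apply: (Hj j.+1) => //; lia.
have := IH (fun i => if i <= j then A i else A i.+1)
           (fun i => if i <= j then x i else x i.+1)
           (fun i => if i < j then y i else y i.+1) isT.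
case.
- move=> i hi; case: ifP => _; apply: HA; lia.
- move=> i hi /=.
  case: (ltngtP i j) => hij; ifs.
  + apply: Hp; lia.
  + apply: Hp; lia.
  + subst i.
    have [p1 p2 p3 p4 [p5 p6 p7]] := Hp j ltac:(lia).
    have [q1 q2 q3 q4 [q5 q6 q7]] := Hp j.+1 ltac:(lia).
    have [m1 m2] := Hm j ltac:(lia).
    split => //.
    * by apply: Lj1.
    * by apply: Rj.
    * split => //; lia.
- move=> i hi /=.
  have [a1 a2] := Hm i ltac:(lia).
  have [b1 b2] := Hm i.+1 ltac:(lia).
  case: (ltngtP i.+1 j) => hij; ifs; split; lia.
- by ifs.
- by ifs; have -> : t = t.+1.-1 by [].
move=> i hi /=; ifs => hab.
  by exists i => //; lia.
by exists i.+1 => //; lia.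
Qed.

Lemma firstabove (P : pred nat) k hi : k < hi -> P hi ->
  exists q, [/\ k < q, q <= hi, P q & forall z, k < z -> z < q -> ~~ P z].
Proof.
move=> khi Phi.
have exP : exists n, (k < n) && P n by exists hi; rewrite khi.
case: (ex_minnP exP) => q /andP [kq Pq] Hmin.
exists q; split => //; first by apply: Hmin; rewrite khi.
move=> z kz zq; apply/negP => Pz.
have := Hmin z; rewrite kz Pz => /(_ isT); lia.
Qed.

Lemma lastbelow (P : pred nat) lo k : lo < k -> P lo ->
  exists p, [/\ lo <= p, p < k, P p & forall z, p < z -> z < k -> ~~ P z].
Proof.
move=> lok Plo.
have exP : exists n, (lo <= n < k) && P n by exists lo; rewrite leqnn lok.
have ub : forall i, (lo <= i < k) && P i -> i <= k by move=> i /andP [/andP [_ h] _]; lia.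
case: (ex_maxnP exP ub) => p /andP [/andP [lop pk] Pp] Hmax.
exists p; split => //.
move=> z pz zk; apply/negP => Pz.
have := Hmax z; rewrite Pz zk (_ : lo <= z = true) /=; last by lia.
move=> /(_ isT); lia.
Qed.

Lemma gapP (P : pred nat) a b k zl zr :
  a <= zl -> zl < k -> k < zr -> zr <= b -> P zl -> P zr -> ~~ P k ->
  exists p q, [/\ a <= p, p < k, k < q, q <= b &
     [/\ P p, P q & forall z, p < z -> z < q -> ~~ P z]].
Proof.
move=> azl zlk kzr zrb Pzl Pzr Pk.
have [p [h1 h2 h3 h4]] := lastbelow zlk Pzl.
have [q [g1 g2 g3 g4]] := firstabove kzr Pzr.
exists p, q; split; try lia; split => // z pz zq.
case: (ltngtP z k) => zk; [exact: h4 | exact: g4 | by rewrite zk].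
Qed.

Definition State (I : Type) (mem : I -> nat -> bool) (inF : I -> Prop) a b t
  (A : nat -> I) (p q : nat -> nat) : Prop :=
  [/\ 0 < t,
      forall i, i < t -> [/\ inF (A i), ~~ (mem (A i) a && mem (A i) b),
         mem (A i) (p i), mem (A i) (q i) &
         [/\ p i < q i, a <= p i, q i <= b &
             forall z, p i < z -> z < q i -> ~~ mem (A i) z]],
      p 0 = a,
      forall i, i.+1 < t -> [/\ p i < p i.+1, p i.+1 < q i & q i < q i.+1] &
      forall i, i < t -> q i <= q t.-1].

Definition Cov (I : Type) (mem : I -> nat -> bool) (inF : I -> Prop) a b :=
  forall k, a < k -> k < b -> exists u, [/\ inF u, ~~ mem u k,
     ~~ (mem u a && mem u b), exists2 z, a <= z & z < k /\ mem u z &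
     exists2 z, k < z & z <= b /\ mem u z].

Lemma cov_gap (I : Type) (mem : I -> nat -> bool) (inF : I -> Prop) a b :
  Cov mem inF a b -> forall k, a < k -> k < b ->
  exists u p q, [/\ inF u, ~~ (mem u a && mem u b), a <= p, p < k &
    [/\ k < q, q <= b, mem u p, mem u q & forall z, p < z -> z < q -> ~~ mem u z]].
Proof.
move=> hC k ak kb; have [u [iu uk uab [zl h1 [h2 h3]] [zr h4 [h5 h6]]]] := hC k ak kb.
have [p [q [g1 g2 g3 g4 [g5 g6 g7]]]] := gapP h1 h2 h4 h5 h3 h6 uk.
by exists u, p, q.
Qed.

Lemma reach_state (I : Type) (mem : I -> nat -> bool) (inF : I -> Prop) a b :
  Cov mem inF a b ->
  forall N t A p q, State mem inF a b t A p q -> b - q t.-1 <= N ->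
  exists t' A' p' q', State mem inF a b t' A' p' q' /\ q' t'.-1 = b.
Proof.
move=> hC; elim=> [|N IH] t A p q St hN.
  exists t, A, p, q; split => //.
  case: St => t0 H _ _ _; have [_ _ _ _ [_ _ h _]] := H t.-1 ltac:(by rewrite ltn_predL); lia.
case: (ltnP (q t.-1) b) => qb; last first.
  exists t, A, p, q; split => //.
  case: St => t0 H _ _ _; have [_ _ _ _ [_ _ h _]] := H t.-1 ltac:(by rewrite ltn_predL); lia.
case: St => t0 H p0 Hc Hq.
have [_ _ _ _ [l1 l2 l3 l4]] := H t.-1 ltac:(by rewrite ltn_predL).
have [u [p' [q' [iu uab ap' p'k [kq' q'b up' uq' ug]]]]] :=
  cov_gap hC (k := q t.-1) ltac:(lia) qb.
case: (ltnP a p') => ap''; last first.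
  have p'a : p' = a by lia.
  subst p'.
  have St1 : State mem inF a b 1 (fun _ => u) (fun _ => a) (fun _ => q').
    by split => //; move=> i hi; split => //; split => //; lia.
  by apply: (IH 1 _ _ _ St1) => /=; lia.
have [j [jt Pj Hj]] := @maxP (fun i => p i < p') t ltac:(by rewrite /= p0) t0.
suff St2 : State mem inF a b j.+2 (fun i => if i <= j then A i else u)
                (fun i => if i <= j then p i else p')
                (fun i => if i <= j then q i else q').
  apply: (IH _ _ _ _ St2) => /=; ifs; lia.
split => //.
- move=> i hi; ifs.
  + apply: H; lia.
  + by split => //; split => //; lia.
- move=> i hi /=.
  case: (ltngtP i j) => hij; ifs; try (exfalso; lia).
  + apply: Hc; lia.
  + subst i; split => //.
    * case: (ltnP j.+1 t) => jt2.
        have [c1 c2 c3] := Hc j jt2.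
        have := Hj j.+1 ltac:(lia) jt2; lia.
      have -> : j = t.-1 by lia.
      done.
    * have := Hq j jt; lia.
- move=> i hi /=; ifs.
  + have := Hq i ltac:(lia); lia.
  + lia.
Qed.

Lemma dp_lemma (I : Type) (mem : I -> nat -> bool) (inF : I -> Prop)
  (hF : NoAbab mem inF) a b : a.+2 <= b ->
  exists k, [/\ a < k, k < b & forall u, inF u -> ~~ mem u k ->
     (exists2 z, a <= z & z < k /\ mem u z) ->
     (exists2 z, k < z & z <= b /\ mem u z) -> mem u a && mem u b].
Proof.
move=> ab; apply: NNPP => Hno.
have hC : Cov mem inF a b.
  move=> k ak kb; apply: NNPP => Hne; apply: Hno.
  exists k; split => // u iu uk h1 h2; apply: NNPP => hab; apply: Hne.
  by exists u; split => //; apply/negP.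
have [u [p0 [q0 [iu uab ap0 p0k [kq0 q0b up0 uq0 ug]]]]] :=
  cov_gap hC (k := a.+1) (ltnSn a) ltac:(lia).
have p0a : p0 = a by lia.
subst p0.
have St1 : State mem inF a b 1 (fun _ => u) (fun _ => a) (fun _ => q0).
  by split => //; move=> i hi; split => //; split => //; lia.
have [t [A [p [q [[t0 H pa Hc Hq] qb]]]]] := reach_state hC (N := b) St1 ltac:(simpl; lia).
have := @chain_lemma I mem inF hF a b t A (fun i => p i.+1) q t0.
case.
- by move=> i hi; have [] := H i hi.
- move=> i hi.
  have [h1 h2 h3 h4 [h5 h6 h7 h8]] := H i ltac:(lia).
  have [g1 g2 g3 g4 [g5 g6 g7 g8]] := H i.+1 hi.
  have [c1 c2 c3] := Hc i hi.
  split => //.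
  + by apply: h8.
  + by apply: g8.
  + split; lia.
- move=> i hi; have [c1 c2 c3] := Hc i ltac:(lia); have [d1 d2 d3] := Hc i.+1 hi.
  split; lia.
- by have [_ _ h _ _] := H 0 t0; rewrite -pa.
- have [_ _ _ h _] := H t.-1 ltac:(by rewrite ltn_predL).
  by rewrite -qb.
move=> i hi hab; have [_ h _ _ _] := H i hi.
by rewrite hab in h.
Qed.

Definition rstr (E : rel nat) (h : nat -> bool) : rel nat :=
  fun u v => [&& E u v, h u & h v].
Definition reach (E : rel nat) (h : nat -> bool) u v :=
  exists p : seq nat, path (rstr E h) u p /\ last u p = v.

Lemma reach_refl E h u : reach E h u u.
Proof. by exists [::]. Qed.

Lemma reach_trans E h u v w : reach E h u v -> reach E h v w -> reach E h u w.
Proof.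
move=> [p1 [h1 l1]] [p2 [h2 l2]]; exists (p1 ++ p2).
by rewrite cat_path last_cat h1 l1 h2 l2.
Qed.

Lemma reach_edge (E : rel nat) (h : nat -> bool) u v :
  E u v -> h u -> h v -> reach E h u v.
Proof. by move=> e hu hv; exists [:: v]; rewrite /= /rstr e hu hv. Qed.

Lemma reach_mono (E E' : rel nat) h u v :
  (forall x y, E x y -> E' x y) -> reach E h u v -> reach E' h u v.
Proof.
move=> sub [p [hp lp]]; exists p; split => //.
apply: (sub_path _ hp) => x y; rewrite /rstr => /and3P [e hx hy].
by rewrite (sub _ _ e) hx hy.
Qed.

Definition Good (I : Type) (mem : I -> nat -> bool) (inF : I -> Prop) a b (E : rel nat) :=
  [/\ forall u v, E u v = E v u, forall u, ~~ E u u,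
      forall u v, E u v -> (a <= u <= b) && (a <= v <= b),
      forall i j k l, i < j -> j < k -> k < l -> ~~ (E i k && E j l) &
      forall f, inF f -> forall u v, a <= u <= b -> a <= v <= b ->
        mem f u -> mem f v -> reach E (mem f) u v].

Lemma tri_base (I : Type) (mem : I -> nat -> bool) (inF : I -> Prop) a b :
  b <= a.+1 -> exists E, Good mem inF a b E.
Proof.
move=> ab.
exists (fun u v => [&& a <= u <= b, a <= v <= b & u != v]); split.
- by move=> u v; rewrite andbCA eq_sym.
- by move=> u; rewrite eqxx !andbF.
- by move=> u v /and3P [-> -> _].
- move=> i j k l ij jk kl; apply/negP => /andP [/and3P [/andP [ai ib] _ _] /and3P [_ /andP [al lb] _]].
  lia.
- move=> f _ u v hu hv fu fv; case: (eqVneq u v) => [->|uv]; first exact: reach_refl.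
  by apply: reach_edge => //; rewrite hu hv uv.
Qed.

Lemma tri (I : Type) (mem : I -> nat -> bool) (inF : I -> Prop)
  (hF : NoAbab mem inF) : forall N a b, b - a <= N -> exists E, Good mem inF a b E.
Proof.
elim=> [|N IH] a b hN; first by apply: tri_base; lia.
case: (ltnP a.+1 b) => ab; last by apply: tri_base.
have [k [ak kb Hk]] := dp_lemma hF ab.
have [E1 [S1 I1 R1 N1 C1]] := IH a k ltac:(lia).
have [E2 [S2 I2 R2 N2 C2]] := IH k b ltac:(lia).
pose r := fun u v : nat => ((u == a) && (v == b)) || ((u == b) && (v == a)).
exists (fun u v => [|| E1 u v, E2 u v | r u v]); split.
- move=> u v; rewrite S1 S2; congr [|| _, _ | _].
  by rewrite /r (andbC (v == a)) (andbC (v == b)) orbC.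
- move=> u; rewrite (negbTE (I1 u)) (negbTE (I2 u)) /r /=.
  apply/negP => /orP [] /andP [/eqP -> /eqP]; lia.
- move=> u v /or3P [e|e|e].
  + have /andP [/andP [h1 h2] /andP [h3 h4]] := R1 _ _ e.
    apply/andP; split; apply/andP; split; lia.
  + have /andP [/andP [h1 h2] /andP [h3 h4]] := R2 _ _ e.
    apply/andP; split; apply/andP; split; lia.
  + case/orP: e => /andP [/eqP -> /eqP ->]; rewrite leqnn; apply/andP; split; apply/andP; split; lia.
- move=> i j k' l ij jk kl; apply/negP => /andP [e1 e2].
  have Rg : forall u v, [|| E1 u v, E2 u v | r u v] ->
     [\/ E1 u v /\ (a <= u <= k) && (a <= v <= k),
         E2 u v /\ (k <= u <= b) && (k <= v <= b) |
         (u == a) && (v == b) || (u == b) && (v == a)].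
    move=> u v /or3P [e|e|e]; [apply: Or31 | apply: Or32 | by apply: Or33].
      by split => //; apply: R1.
    by split => //; apply: R2.
  case: (Rg _ _ e1) => [[f1 /andP [/andP [p1 p2] /andP [p3 p4]]]
                       |[f1 /andP [/andP [p1 p2] /andP [p3 p4]]]
                       |/orP [/andP [/eqP p1 /eqP p2]|/andP [/eqP p1 /eqP p2]]];
  case: (Rg _ _ e2) => [[g1 /andP [/andP [q1 q2] /andP [q3 q4]]]
                       |[g1 /andP [/andP [q1 q2] /andP [q3 q4]]]
                       |/orP [/andP [/eqP q1 /eqP q2]|/andP [/eqP q1 /eqP q2]]];
  try lia.
  + by have := N1 i j k' l ij jk kl; rewrite f1 g1.
  + by have := N2 i j k' l ij jk kl; rewrite f1 g1.
- move=> f iF u v hu hv fu fv.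
  have sub1 : forall x y, E1 x y -> [|| E1 x y, E2 x y | r x y] by move=> x y ->.
  have sub2 : forall x y, E2 x y -> [|| E1 x y, E2 x y | r x y]
    by move=> x y ->; rewrite orbT.
  have L1 : forall x y, a <= x <= k -> a <= y <= k -> mem f x -> mem f y ->
     reach (fun u v => [|| E1 u v, E2 u v | r u v]) (mem f) x y.
    move=> x y hx hy fx fy; apply: reach_mono sub1 _; exact: C1.
  have L2 : forall x y, k <= x <= b -> k <= y <= b -> mem f x -> mem f y ->
     reach (fun u v => [|| E1 u v, E2 u v | r u v]) (mem f) x y.
    move=> x y hx hy fx fy; apply: reach_mono sub2 _; exact: C2.
  have root : mem f a -> mem f b ->
     reach (fun u v => [|| E1 u v, E2 u v | r u v]) (mem f) a b.
    by move=> fa fb; apply: reach_edge => //; rewrite /r !eqxx !orbT.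
  have root' : mem f a -> mem f b ->
     reach (fun u v => [|| E1 u v, E2 u v | r u v]) (mem f) b a.
    by move=> fa fb; apply: reach_edge => //; rewrite /r !eqxx !orbT.
  move: hu hv => /andP [au ub] /andP [av vb].
  case: (leqP u k) => uk; case: (leqP v k) => vk.
  + apply: L1 => //; apply/andP; split; lia.
  + case fk: (mem f k).
      apply: reach_trans (L1 u k _ _ fu fk) (L2 k v _ _ fk fv); apply/andP; split; lia.
    case: (ltngtP u k) => uk2; last by rewrite -uk2 fu in fk.
      have /andP [fa fb] := Hk f iF (negbT fk) (ex_intro2 _ _ u au (conj uk2 fu))
                                      (ex_intro2 _ _ v vk (conj vb fv)).
      apply: reach_trans (L1 u a _ _ fu fa) (reach_trans (root fa fb) (L2 b v _ _ fb fv));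
        apply/andP; split; lia.
    lia.
  + case fk: (mem f k).
      apply: reach_trans (L2 u k _ _ fu fk) (L1 k v _ _ fk fv); apply/andP; split; lia.
    case: (ltngtP v k) => vk2; last by rewrite -vk2 fv in fk.
      have /andP [fa fb] := Hk f iF (negbT fk) (ex_intro2 _ _ v av (conj vk2 fv))
                                      (ex_intro2 _ _ u uk (conj ub fu)).
      apply: reach_trans (L2 u b _ _ fu fb) (reach_trans (root' fa fb) (L1 a v _ _ fa fv));
        apply/andP; split; lia.
    lia.
  + apply: L2 => //; apply/andP; split; lia.
Qed.

Lemma path_map_rel (T1 T2 : Type) (e1 : rel T1) (e2 : rel T2) (f : T1 -> T2) :
  (forall u v, e1 u v -> e2 (f u) (f v)) ->
  forall x p, path e1 x p -> path e2 (f x) (map f p).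
Proof.
move=> H x p; elim: p x => //= y p IH x /andP [e pp].
by rewrite H // IH.
Qed.

Lemma le_pred_size i m : i < m -> i <= m.-1.
Proof. by case: m => [//|m] /=; rewrite ltnS. Qed.

Theorem mainTheorem16 (n : nat) (Hn : 3 <= n) (F : {set {set 'I_n}})
  (c : 'I_n -> bool) :
  abab_free F ->
  exists Q : rel 'I_n,
    [/\ simple_graph_on [set x | c x] Q,
        outerplanar_on [set x | c x] Q &
        forall H, H \in F -> induced_connected Q (H :&: [set x | c x])].
Proof.
move=> hab.
have n0 : 0 < n by lia.
pose x0 : 'I_n := Ordinal n0.
pose s := [seq x <- enum 'I_n | c x].
have Su : uniq s by apply: filter_uniq; apply: enum_uniq.
have Sm : forall x, (x \in s) = c x by move=> x; rewrite mem_filter mem_enum andbT.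
have Sst : sorted (relpre val ltn) s.
  apply: sorted_filter; first by move=> ? ? ? /=; apply: ltn_trans.
  by rewrite -sorted_map val_enum_ord iota_ltn_sorted.
have Ssort : forall i j, i < j -> j < size s -> val (nth x0 s i) < val (nth x0 s j).
  move=> i j ij js.
  have := sorted_ltn_nth (leT := relpre val ltn) _ x0 Sst.
  move=> /(_ _ i j); apply => //.
  - by move=> ? ? ? /=; apply: ltn_trans.
  - exact: ltn_trans ij js.
pose mem (H : {set 'I_n}) i := (i < size s) && (nth x0 s i \in H).
pose inF (H : {set 'I_n}) := H \in F.
have hF : NoAbab mem inF.
  move=> u v iu iv z x y w zx xy yw /andP [zs uz] vz
    /andP [xs vx] ux /andP [ys uy] vy /andP [ws vw] uw.
  rewrite /mem zs /= in vz; rewrite /mem xs /= in ux.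
  rewrite /mem ys /= in vy; rewrite /mem ws /= in uw.
  apply: (hab u v iu iv).
  exists (nth x0 s z), (nth x0 s x), (nth x0 s y), (nth x0 s w); split.
  - rewrite /cyc_order4; apply/orP; left.
    rewrite !Ssort //; lia.
  - by rewrite in_setD uz vz.
  - by rewrite in_setD uy vy.
  - by rewrite in_setD vx ux.
  - by rewrite in_setD vw uw.
have [E [ES EI ER EN EC]] := @tri _ mem inF hF (size s) 0 (size s).-1 ltac:(lia).
exists (fun x y => [&& x \in s, y \in s & E (index x s) (index y s)]); split.
- split.
  + by move=> x y; rewrite andbCA ES.
  + by move=> x; rewrite (negbTE (EI _)) !andbF.
  + by move=> x y /and3P [xs ys _]; rewrite !inE -!Sm xs ys.
- exists s; split => //.
    by move=> x; rewrite inE Sm.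
  move=> x1 i j k l ij jk kl ls.
  have ks : k < size s := ltn_trans kl ls.
  have js : j < size s := ltn_trans jk ks.
  have is' : i < size s := ltn_trans ij js.
  rewrite !mem_nth // !index_uniq //=.
  exact: EN.
- move=> H HF x y; rewrite !inE => /andP [xH cx] /andP [yH cy].
  have xs : x \in s by rewrite Sm.
  have ys : y \in s by rewrite Sm.
  have ix := index_mem x s; have iy := index_mem y s.
  rewrite xs in ix; rewrite ys in iy.
  have := EC H HF (index x s) (index y s).
  case.
  - by rewrite leq0n le_pred_size.
  - by rewrite leq0n le_pred_size.
  - by rewrite /mem ix nth_index.
  - by rewrite /mem iy nth_index.
  move=> p [pp lp]; apply/connectP.
  exists (map (nth x0 s) p).
    rewrite -{1}(nth_index x0 xs).
    apply: (path_map_rel _ pp) => u v; rewrite /rstr /mem.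
    move=> /and3P [e /andP [us uH] /andP [vs vH]].
    rewrite /= !inE !mem_nth //= !index_uniq // e uH vH -!Sm !mem_nth //.
  by rewrite -{1}(nth_index x0 xs) last_map lp nth_index.
Qed.
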